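(* Let $Z\in\mathfrak m$ and let $p,q$ be power series with only even-order terms such that $p(\mathrm{ad}_{JZ})$ and $q(\mathrm{ad}_Z)$ converge as operators on $\mathfrak m$. Then $p(\mathrm{ad}_{JZ})$ and $q(\mathrm{ad}_Z)$ commute as endomorphisms of $\mathfrak m$.
   Context: $\mathfrak g$ is a complex simple Lie algebra with a decomposition $\mathfrak g=\mathfrak k\oplus\mathfrak m$ into the $\pm1$-eigenspaces of an involutive automorphism, arising from an irreducible Hermitian symmetric space: there is $\Upsilon$ in the center of $\mathfrak k$ such that $\mathrm{ad}_\Upsilon$ has eigenvalues $\pm i$ on $\mathfrak m$, with eigenspaces $\mathfrak m^\pm$ (so $[\mathfrak k,\mathfrak m^\pm]\subseteq\mathfrak m^\pm$, $[\mathfrak m^\pm,\mathfrak m^\pm]=0$, $[\mathfrak m,\mathfrak m]\subseteq\mathfrak k$). $J=\mathrm{ad}_\Upsilon|_{\mathfrak m}$. *)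

(* Defs.v *)
From HB Require Import structures.
From mathcomp Require Import all_boot all_order all_algebra.
From mathcomp Require Import complex.
From mathcomp Require Import all_classical all_reals topology normedtype sequences.
Import Order.TTheory GRing.Theory Num.Theory numFieldTopology.Exports numFieldNormedType.Exports.
Local Open Scope ring_scope.

Set Implicit Arguments.
Unset Strict Implicit.
Unset Printing Implicit Defensive.

Definition CC (R : realType) : numClosedFieldType := R[i].

(* A finite-dimensional complex Lie algebra g is modelled (after choosing a
   basis) on the row vectors 'rV[CC R]_n with a bracket br. *)
Definition is_lie_bracket (R : realType) (n : nat)
    (br : 'rV[CC R]_n -> 'rV[CC R]_n -> 'rV[CC R]_n) : Prop :=
  [/\ forall a x y z, br (a *: x + y) z = a *: br x z + br y z,
      forall a x y z, br x (a *: y + z) = a *: br x y + br x z,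
      forall x, br x x = 0 &
      forall x y z, br x (br y z) + br y (br z x) + br z (br x y) = 0].

Definition lie_ideal (R : realType) (n : nat)
    (br : 'rV[CC R]_n -> 'rV[CC R]_n -> 'rV[CC R]_n) (U : 'M[CC R]_n) : Prop :=
  forall x y, (y <= U)%MS -> (br x y <= U)%MS.

Definition simple_lie_algebra (R : realType) (n : nat)
    (br : 'rV[CC R]_n -> 'rV[CC R]_n -> 'rV[CC R]_n) : Prop :=
  [/\ is_lie_bracket br,
      exists x y, br x y != 0 &
      forall U : 'M[CC R]_n, lie_ideal br U -> (\rank U == 0)%N || row_full U].

Definition involutive_automorphism (R : realType) (n : nat)
    (br : 'rV[CC R]_n -> 'rV[CC R]_n -> 'rV[CC R]_n)
    (theta : 'rV[CC R]_n -> 'rV[CC R]_n) : Prop :=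
  [/\ forall a x y, theta (a *: x + y) = a *: theta x + theta y,
      forall x y, theta (br x y) = br (theta x) (theta y) &
      forall x, theta (theta x) = x].

Definition in_k (R : realType) (n : nat) (theta : 'rV[CC R]_n -> 'rV[CC R]_n)
  (x : 'rV[CC R]_n) : Prop := theta x = x.
Definition in_m (R : realType) (n : nat) (theta : 'rV[CC R]_n -> 'rV[CC R]_n)
  (x : 'rV[CC R]_n) : Prop := theta x = - x.

Definition hermitian_element (R : realType) (n : nat)
    (br : 'rV[CC R]_n -> 'rV[CC R]_n -> 'rV[CC R]_n)
    (theta : 'rV[CC R]_n -> 'rV[CC R]_n) (Ups : 'rV[CC R]_n) : Prop :=
  [/\ in_k theta Ups,
      forall x, in_k theta x -> br Ups x = 0,
      forall v, in_m theta v -> exists vp vm,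
          [/\ v = vp + vm, in_m theta vp, in_m theta vm,
              br Ups vp = 'i *: vp & br Ups vm = - 'i *: vm],
      exists v, [/\ in_m theta v, v != 0 & br Ups v = 'i *: v] &
      exists v, [/\ in_m theta v, v != 0 & br Ups v = - 'i *: v]].

Definition even_power_series (R : realType) (a : nat -> CC R) : Prop :=
  forall k, odd k -> a k = 0.

Definition pser_partial (R : realType) (n : nat) (a : nat -> CC R)
    (f : 'rV[CC R]_n -> 'rV[CC R]_n) (N : nat) (v : 'rV[CC R]_n) : 'rV[CC R]_n :=
  \sum_(k < N) a k *: iter k f v.

(* a(f) converges as an operator on m (pointwise on m; equivalent to operator
   convergence since m is finite-dimensional). *)
Definition pser_converges_on_m (R : realType) (n : nat)
    (theta : 'rV[CC R]_n -> 'rV[CC R]_n) (a : nat -> CC R)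
    (f : 'rV[CC R]_n -> 'rV[CC R]_n) : Prop :=
  forall v, in_m theta v -> cvgn (pser_partial a f ^~ v).

Definition pser_op (R : realType) (n : nat) (a : nat -> CC R)
    (f : 'rV[CC R]_n -> 'rV[CC R]_n) (v : 'rV[CC R]_n) : 'rV[CC R]_n :=
  limn (pser_partial a f ^~ v).

(* Main.v *)
Require Import Defs.
From HB Require Import structures.
From mathcomp Require Import all_boot all_order all_algebra.
From mathcomp Require Import complex.
From mathcomp Require Import all_classical all_reals topology normedtype sequences.
Import Order.TTheory GRing.Theory Num.Theory numFieldTopology.Exports numFieldNormedType.Exports.
Local Open Scope classical_set_scope.
Local Open Scope ring_scope.
Set Implicit Arguments.
Unset Strict Implicit.
Unset Printing Implicit Defensive.

Definition linf (R : realType) (n : nat) (f : 'rV[CC R]_n -> 'rV[CC R]_n) :=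
  forall a x y, f (a *: x + y) = a *: f x + f y.

Lemma linf0 R n (f : 'rV[CC R]_n -> 'rV[CC R]_n) : linf f -> f 0 = 0.
Proof.
move=> h; have := h 1 0 0; rewrite !scale1r addr0 => /(congr1 (fun z => z - f 0)).
by rewrite subrr addrK => /esym.
Qed.

Lemma cvg_sum_seq (R : realType) n (I : Type) (r : seq I) (h : I -> nat -> 'rV[CC R]_n) (l : I -> 'rV[CC R]_n) :
  (forall j, h j @ \oo --> l j) ->
  (fun N => \sum_(j <- r) h j N) @ \oo --> \sum_(j <- r) l j.
Proof.
move=> hl; elim: r => [|x r IH].
  rewrite big_nil.
  have -> : (fun N => \sum_(j <- [::]) h j N) = (fun=> 0) by apply/funext => N; rewrite big_nil.
  apply: cvg_cst.
rewrite big_cons.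
have -> : (fun N => \sum_(j <- x :: r) h j N) = (fun N => h x N + \sum_(j <- r) h j N).
  by apply/funext => N; rewrite big_cons.
apply: cvgD. apply: hl. apply: IH.
Qed.

Lemma linfD R n (f : 'rV[CC R]_n -> 'rV[CC R]_n) : linf f -> forall x y, f (x + y) = f x + f y.
Proof. by move=> h x y; have := h 1 x y; rewrite !scale1r. Qed.
Lemma linfZ R n (f : 'rV[CC R]_n -> 'rV[CC R]_n) : linf f -> forall a x, f (a *: x) = a *: f x.
Proof. move=> h a x. have := h a x 0. rewrite addr0 (linf0 h) addr0. by []. Qed.
Lemma linfN R n (f : 'rV[CC R]_n -> 'rV[CC R]_n) : linf f -> forall x, f (- x) = - f x.
Proof. by move=> h x; rewrite -scaleN1r (linfZ h) scaleN1r. Qed.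
Lemma linfB R n (f : 'rV[CC R]_n -> 'rV[CC R]_n) : linf f -> forall x y, f (x - y) = f x - f y.
Proof. by move=> h x y; rewrite (linfD h) (linfN h). Qed.
Lemma linf_sum R n (f : 'rV[CC R]_n -> 'rV[CC R]_n) (I : Type) (r : seq I) (P : pred I) (g : I -> 'rV[CC R]_n) :
  linf f -> f (\sum_(i <- r | P i) g i) = \sum_(i <- r | P i) f (g i).
Proof.
move=> h; elim: r => [|x r IH]; first by rewrite !big_nil (linf0 h).
by rewrite !big_cons; case: (P x) => //; rewrite (linfD h) IH.
Qed.

Lemma lin_cvg R n (f : 'rV[CC R]_n -> 'rV[CC R]_n) (u : nat -> 'rV[CC R]_n) (l : 'rV[CC R]_n) :
  linf f -> u @ \oo --> l -> (fun N => f (u N)) @ \oo --> f l.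
Proof.
move=> h ul.
have E : forall w, f w = \sum_(i < n) w 0 i *: f (delta_mx 0 i).
  by move=> w; rewrite {1}(row_sum_delta w) (linf_sum _ _ _ h); apply: eq_bigr => i _; rewrite (linfZ h).
rewrite E.
have -> : (fun N => f (u N)) = (fun N => \sum_(i < n) u N 0 i *: f (delta_mx 0 i)).
  by apply/funext => N; rewrite E.
apply: cvg_sum_seq => i.
apply: cvgZ; last by apply: cvg_cst.
have := @continuous_cvg _ _ _ _ _ u (fun M : 'rV[CC R]_n => M 0 i) l (@coord_continuous _ 1 n 0 i l) ul.
move=> H; apply: H.
Qed.


Lemma brl R n (br : 'rV[CC R]_n -> 'rV[CC R]_n -> 'rV[CC R]_n) : is_lie_bracket br -> forall z, linf (fun x => br x z).
Proof. by case=> h _ _ _ z a x y; apply: h. Qed.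
Lemma brr R n (br : 'rV[CC R]_n -> 'rV[CC R]_n -> 'rV[CC R]_n) : is_lie_bracket br -> forall x, linf (br x).
Proof. by case=> _ h _ _ x a y z; apply: h. Qed.

Lemma brDl R n (br : 'rV[CC R]_n -> 'rV[CC R]_n -> 'rV[CC R]_n) : is_lie_bracket br -> forall x y z, br (x + y) z = br x z + br y z.
Proof. by move=> L x y z; apply: (linfD (brl L z)). Qed.
Lemma brZl R n (br : 'rV[CC R]_n -> 'rV[CC R]_n -> 'rV[CC R]_n) : is_lie_bracket br -> forall a x z, br (a *: x) z = a *: br x z.
Proof. by move=> L a x z; apply: (linfZ (brl L z)). Qed.
Lemma brNl R n (br : 'rV[CC R]_n -> 'rV[CC R]_n -> 'rV[CC R]_n) : is_lie_bracket br -> forall x z, br (- x) z = - br x z.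
Proof. by move=> L x z; apply: (linfN (brl L z)). Qed.
Lemma brBl R n (br : 'rV[CC R]_n -> 'rV[CC R]_n -> 'rV[CC R]_n) : is_lie_bracket br -> forall x y z, br (x - y) z = br x z - br y z.
Proof. by move=> L x y z; apply: (linfB (brl L z)). Qed.
Lemma br0l R n (br : 'rV[CC R]_n -> 'rV[CC R]_n -> 'rV[CC R]_n) : is_lie_bracket br -> forall z, br 0 z = 0.
Proof. by move=> L z; apply: (linf0 (brl L z)). Qed.
Lemma brDr R n (br : 'rV[CC R]_n -> 'rV[CC R]_n -> 'rV[CC R]_n) : is_lie_bracket br -> forall x y z, br z (x + y) = br z x + br z y.
Proof. by move=> L x y z; apply: (linfD (brr L z)). Qed.
Lemma brZr R n (br : 'rV[CC R]_n -> 'rV[CC R]_n -> 'rV[CC R]_n) : is_lie_bracket br -> forall a x z, br z (a *: x) = a *: br z x.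
Proof. by move=> L a x z; apply: (linfZ (brr L z)). Qed.
Lemma brNr R n (br : 'rV[CC R]_n -> 'rV[CC R]_n -> 'rV[CC R]_n) : is_lie_bracket br -> forall x z, br z (- x) = - br z x.
Proof. by move=> L x z; apply: (linfN (brr L z)). Qed.
Lemma brBr R n (br : 'rV[CC R]_n -> 'rV[CC R]_n -> 'rV[CC R]_n) : is_lie_bracket br -> forall x y z, br z (x - y) = br z x - br z y.
Proof. by move=> L x y z; apply: (linfB (brr L z)). Qed.
Lemma br0r R n (br : 'rV[CC R]_n -> 'rV[CC R]_n -> 'rV[CC R]_n) : is_lie_bracket br -> forall z, br z 0 = 0.
Proof. by move=> L z; apply: (linf0 (brr L z)). Qed.

Lemma brA R n (br : 'rV[CC R]_n -> 'rV[CC R]_n -> 'rV[CC R]_n) : is_lie_bracket br -> forall x y, br x y = - br y x.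
Proof.
move=> L x y; have := let: And4 _ _ h _ := L in h (x + y).
rewrite (brDl L) !(brDr L).
have [_ _ h _] := L; rewrite !h add0r addr0 => /eqP; rewrite addr_eq0 => /eqP.
by [].
Qed.

Lemma Der R n (br : 'rV[CC R]_n -> 'rV[CC R]_n -> 'rV[CC R]_n) : is_lie_bracket br -> forall x u w,
  br x (br u w) = br (br x u) w + br u (br x w).
Proof.
move=> L x u w; have [_ _ _ J] := L; have := J x u w.
rewrite (brA L w x) (brNr L) (brA L w (br x u)).
move/eqP; rewrite -addrA -opprD subr_eq0 => /eqP ->.
by rewrite addrC.
Qed.

Definition E (R : realType) n (br : 'rV[CC R]_n -> 'rV[CC R]_n -> 'rV[CC R]_n) theta Ups (t : CC R) u :=
  in_m theta u /\ br Ups u = t *: u.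

Lemma thbr R n (br : 'rV[CC R]_n -> 'rV[CC R]_n -> 'rV[CC R]_n) theta :
  involutive_automorphism br theta -> forall x y, theta (br x y) = br (theta x) (theta y).
Proof. by case. Qed.
Lemma thl R n (br : 'rV[CC R]_n -> 'rV[CC R]_n -> 'rV[CC R]_n) theta :
  involutive_automorphism br theta -> linf theta.
Proof. by case. Qed.

Lemma C3 R n (br : 'rV[CC R]_n -> 'rV[CC R]_n -> 'rV[CC R]_n) theta : is_lie_bracket br ->
  involutive_automorphism br theta -> forall x u, in_m theta x -> in_m theta u -> in_k theta (br x u).
Proof. by move=> L Th x u hx hu; rewrite /in_k (thbr Th) hx hu (brNl L) (brNr L) opprK. Qed.
Lemma C4 R n (br : 'rV[CC R]_n -> 'rV[CC R]_n -> 'rV[CC R]_n) theta : is_lie_bracket br ->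
  involutive_automorphism br theta -> forall x w, in_m theta x -> in_k theta w -> in_m theta (br x w).
Proof. by move=> L Th x w hx hw; rewrite /in_m (thbr Th) hx hw (brNl L). Qed.

Lemma C1 R n (br : 'rV[CC R]_n -> 'rV[CC R]_n -> 'rV[CC R]_n) theta Ups t : is_lie_bracket br ->
  involutive_automorphism br theta -> (forall x, in_k theta x -> br Ups x = 0) -> t != 0 ->
  forall x u, E br theta Ups t x -> E br theta Ups t u -> br x u = 0.
Proof.
move=> L Th Hz t0 x u [hx ex] [hu eu].
have := Hz _ (C3 L Th hx hu).
rewrite (Der L) ex eu (brZl L) (brZr L) -scalerDl => /eqP.
rewrite -[t + t]mulr2n -(scaler0 _ (t *+ 2)) => /eqP /scalerI -> //.
  by rewrite scaler0.
by rewrite (@mulrn_eq0 (CC R)) negb_or t0.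
Qed.

Lemma C2 R n (br : 'rV[CC R]_n -> 'rV[CC R]_n -> 'rV[CC R]_n) theta Ups t : is_lie_bracket br ->
  involutive_automorphism br theta -> (forall x, in_k theta x -> br Ups x = 0) ->
  forall x w, E br theta Ups t x -> in_k theta w -> E br theta Ups t (br x w).
Proof.
move=> L Th Hz x w [hx ex] hw; split; first exact: (C4 L Th).
by rewrite (Der L) ex (Hz _ hw) (br0r L) addr0 (brZl L).
Qed.

Lemma Key R n (br : 'rV[CC R]_n -> 'rV[CC R]_n -> 'rV[CC R]_n) theta Ups t : is_lie_bracket br ->
  involutive_automorphism br theta -> (forall x, in_k theta x -> br Ups x = 0) -> t != 0 ->
  forall x y v, E br theta Ups t x -> E br theta Ups (- t) y -> E br theta Ups (- t) v ->
  br x (br x (br y (br x v))) = br x (br y (br x (br x v))).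
Proof.
move=> L Th Hz t0 x y v Ex Ey Ev.
have mt0 : - t != 0 by rewrite oppr_eq0.
have F1 : br y v = 0 by apply: (C1 L Th Hz mt0).
have F2 : forall z, E br theta Ups (- t) z -> br x (br x (br x z)) = 0.
  move=> z Ez; apply: (C1 L Th Hz t0 Ex).
  apply: (C2 L Th Hz Ex); apply: (C3 L Th Ex.1 Ez.1).
pose T := br (br x (br x y)) (br x v) + br (br x y) (br x (br x v)).
have HA : br x (br (br x y) (br x v)) = T by rewrite (Der L).
have HB : T + T + T = 0.
  have : br x (br x (br x (br y v))) = 0 by rewrite F1 !(br0r L).
  rewrite (Der L x y v) !(brDr L) (Der L x (br x y) v) (Der L x y (br x v)) !(brDr L).
  rewrite (Der L x (br x (br x y)) v) (Der L x y (br x (br x v))) (F2 _ Ey) (F2 _ Ev) (br0l L) (br0r L) HA.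
  move=> <-; rewrite /T; set p := br (br x (br x y)) (br x v); set q := br (br x y) (br x (br x v)); rewrite ?add0r ?addr0 !addrA.
  by rewrite (addrAC p q p) (addrAC (p+p+q) q p).
have T0 : T = 0.
  move: HB; have -> : T + T + T = T *+ 3 by rewrite !mulrS mulr0n addr0 !addrA.
  rewrite -scaler_nat => /eqP; rewrite -(scaler0 _ (3%:R : CC R)) => /eqP /scalerI -> //.
    by rewrite scaler0.
  by rewrite (@pnatr_eq0 (CC R)).
have D : forall w, br (br x y) w = br x (br y w) - br y (br x w).
  by move=> w; rewrite (Der L x y w) addrK.
move: HA; rewrite T0 D (brBr L) => /eqP; rewrite subr_eq0 => /eqP.
by [].
Qed.

Lemma Core R n (br : 'rV[CC R]_n -> 'rV[CC R]_n -> 'rV[CC R]_n) theta Ups t : is_lie_bracket br ->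
  involutive_automorphism br theta -> (forall x, in_k theta x -> br Ups x = 0) -> t != 0 ->
  forall x y u g h, E br theta Ups t x -> E br theta Ups (- t) y -> E br theta Ups t u ->
  (forall w, g w = br x w + br y w) -> (forall w, h w = br x w - br y w) ->
  g (g (h (h u))) = h (h (g (g u))).
Proof.
move=> L Th Hz t0 x y u g h Ex Ey Eu hg hh.
have mt0 : - t != 0 by rewrite oppr_eq0.
have A0 : br x u = 0 by apply: (C1 L Th Hz t0).
have Bk : in_k theta (br y u) by apply: (C3 L Th Ey.1 Eu.1).
have W1 : br x (br x (br y u)) = 0.
  by apply: (C1 L Th Hz t0 Ex); apply: (C2 L Th Hz Ex).
have W2 : br y (br y (br y u)) = 0.
  by apply: (C1 L Th Hz mt0 Ey); apply: (C2 L Th Hz Ey).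
have Ex' : E br theta Ups (- - t) x by rewrite opprK.
have Eu' : E br theta Ups (- - t) u by rewrite opprK.
have K := Key L Th Hz mt0 Ey Ex' Eu'.
rewrite !hh !hg !(brDr L) !(brNr L) !(brDr L) !(brNr L) A0 !(br0r L) ?oppr0 ?W1 ?W2 ?(br0r L) ?oppr0 ?add0r ?addr0 ?sub0r ?subr0.
by rewrite K !opprK subrr addr0 subr0.
Qed.

Lemma linf_comp R n (f g : 'rV[CC R]_n -> 'rV[CC R]_n) : linf f -> linf g -> linf (fun w => f (g w)).
Proof. by move=> hf hg a x y; rewrite hg hf. Qed.

Lemma Comm R n (br : 'rV[CC R]_n -> 'rV[CC R]_n -> 'rV[CC R]_n) theta Ups Z :
  is_lie_bracket br -> involutive_automorphism br theta -> hermitian_element br theta Ups ->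
  in_m theta Z -> forall u, in_m theta u ->
  br (br Ups Z) (br (br Ups Z) (br Z (br Z u))) = br Z (br Z (br (br Ups Z) (br (br Ups Z) u))).
Proof.
move=> L Th [Hk Hz Hdec _ _] hZ u hu.
have i0 : ('i : CC R) != 0 by apply: neq0Ci.
have mi0 : (- 'i : CC R) != 0 by rewrite oppr_eq0.
have [X [Y [eZ mX mY eX eY]]] := Hdec Z hZ.
have [up [um [eu mup mum eup eum]]] := Hdec u hu.
pose hX := fun w => br X w - br Y w.
pose gX := fun w => br X w + br Y w.
have lh : linf hX by move=> a w1 w2; rewrite /hX !(brr L) scalerBr addrACA opprD.
have lg : linf gX by move=> a w1 w2; rewrite /gX !(brr L) scalerDr addrACA.
have hf : forall w, br (br Ups Z) w = 'i *: hX w.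
  by move=> w; rewrite eZ (brDr L) eX eY (brDl L) !(brZl L) scaleNr /hX scalerBr.
have hg : forall w, br Z w = gX w by move=> w; rewrite eZ (brDl L).
have hXe : forall w, hX w = br X w - br Y w by [].
have gXe : forall w, gX w = br X w + br Y w by [].
clearbody hX gX.
rewrite !hf !hg !(linfZ lh) !(linfZ lg) eu !(linfD lh) !(linfD lg).
rewrite !(linfD lh).
congr (_ *: (_ *: (_ + _))).
  symmetry; apply: (Core L Th Hz i0 (x := X) (y := Y) (u := up) (g := gX) (h := hX)) => //; by split.
have Ex' : E br theta Ups (- - 'i) X by rewrite opprK.
have H := Core L Th Hz mi0 (x := Y) (y := X) (u := um) (g := gX) (h := fun w => - hX w).
have {}H := H (conj mY eY) Ex' (conj mum eum).
have g' : forall w, gX w = br Y w + br X w by move=> w; rewrite gXe [LHS]addrC.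
have h' : forall w, - hX w = br Y w - br X w by move=> w; rewrite hXe opprB.
have {H g' h'} := H g' h'.
rewrite !(linfN lh) !opprK => ->.
by [].
Qed.

Lemma iter_double (T : Type) (f : T -> T) j x : iter (j.*2) f x = iter j (fun w => f (f w)) x.
Proof. by elim: j => [|j IH] //; rewrite doubleS /= IH. Qed.

Lemma iter_comm (T : Type) (P : T -> Prop) (F G : T -> T) :
  (forall u, P u -> P (F u)) -> (forall u, P u -> P (G u)) ->
  (forall u, P u -> F (G u) = G (F u)) ->
  forall j k u, P u -> iter j F (iter k G u) = iter k G (iter j F u).
Proof.
move=> PF PG FG.
have PiG : forall k u, P u -> P (iter k G u) by elim=> [|k IH] u hu //=; apply: PG; apply: IH.
have PiF : forall k u, P u -> P (iter k F u) by elim=> [|k IH] u hu //=; apply: PF; apply: IH.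
have H1 : forall k u, P u -> F (iter k G u) = iter k G (F u).
  elim=> [|k IH] u hu //=; rewrite FG ?IH //; exact: PiG.
elim=> [|j IH] k u hu //=; rewrite IH // H1 //; exact: PiF.
Qed.

Lemma linf_iter R n (f : 'rV[CC R]_n -> 'rV[CC R]_n) k : linf f -> linf (iter k f).
Proof. move=> hf; elim: k => [|k IH] a x y //=; by rewrite IH hf. Qed.

Lemma linf_partial R n (a : nat -> CC R) (f : 'rV[CC R]_n -> 'rV[CC R]_n) N :
  linf f -> linf (pser_partial a f N).
Proof.
move=> hf c x y; rewrite /pser_partial scaler_sumr -big_split /=.
apply: eq_bigr => k _; rewrite (linf_iter k hf) scalerDr !scalerA mulrC.
by [].
Qed.

Lemma even_iter_comm (T : Type) (P : T -> Prop) (f g : T -> T) :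
  (forall u, P u -> P (f (f u))) -> (forall u, P u -> P (g (g u))) ->
  (forall u, P u -> f (f (g (g u))) = g (g (f (f u)))) ->
  forall j k u, P u -> ~~ odd j -> ~~ odd k -> iter j f (iter k g u) = iter k g (iter j f u).
Proof.
move=> Pf Pg FG j k u hu oj ok.
rewrite -[j]odd_double_half -[k]odd_double_half (negbTE oj) (negbTE ok) /= !add0n !iter_double.
by apply: (iter_comm (P := P)).
Qed.

Lemma PQ_comm R n (p q : nat -> CC R) (f g : 'rV[CC R]_n -> 'rV[CC R]_n) (u : 'rV[CC R]_n) M N :
  even_power_series p -> even_power_series q -> linf f -> linf g ->
  (forall j k, ~~ odd j -> ~~ odd k -> iter j f (iter k g u) = iter k g (iter j f u)) ->
  pser_partial p f M (pser_partial q g N u) = pser_partial q g N (pser_partial p f M u).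
Proof.
move=> ep eq lf lg C; rewrite /pser_partial.
under eq_bigr => j _ do rewrite (linf_sum _ _ _ (linf_iter j lf)) scaler_sumr.
under [RHS]eq_bigr => k _ do rewrite (linf_sum _ _ _ (linf_iter k lg)) scaler_sumr.
rewrite exchange_big /=; apply: eq_bigr => k _; apply: eq_bigr => j _.
rewrite (linfZ (linf_iter j lf)) (linfZ (linf_iter k lg)) !scalerA.
case oj : (odd j); first by rewrite (ep j oj) mulr0 mul0r !scale0r.
case ok : (odd k); first by rewrite (eq k ok) mulr0 mul0r !scale0r.
by rewrite C ?oj ?ok // mulrC.
Qed.

Lemma partial_in_m R n (br : 'rV[CC R]_n -> 'rV[CC R]_n -> 'rV[CC R]_n) theta (a : nat -> CC R) (h : 'rV[CC R]_n -> 'rV[CC R]_n) v N :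
  involutive_automorphism br theta -> even_power_series a ->
  (forall k w, in_m theta w -> ~~ odd k -> in_m theta (iter k h w)) ->
  in_m theta v -> in_m theta (pser_partial a h N v).
Proof.
move=> Th ea hk hv; rewrite /in_m /pser_partial (linf_sum _ _ _ (thl Th)) -sumrN.
apply: eq_bigr => k _; rewrite (linfZ (thl Th)).
case ok : (odd k); first by rewrite (ea k ok) !scale0r oppr0.
by rewrite hk ?ok // scalerN.
Qed.

Lemma even_iter_P (T : Type) (P : T -> Prop) (h : T -> T) k w :
  (forall w, P w -> P (h (h w))) -> P w -> ~~ odd k -> P (iter k h w).
Proof.
move=> Ph hw ok; rewrite -[k]odd_double_half (negbTE ok) add0n iter_double.
by elim: (k./2) => [|j IH] //=; apply: Ph.
Qed.

Unset Implicit Arguments.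
Set Strict Implicit.

Theorem corollary4p3 (R : realType) (n : nat)
    (br : 'rV[CC R]_n -> 'rV[CC R]_n -> 'rV[CC R]_n)
    (theta : 'rV[CC R]_n -> 'rV[CC R]_n) (Ups Z : 'rV[CC R]_n)
    (p q : nat -> CC R) :
  simple_lie_algebra br ->
  involutive_automorphism br theta ->
  hermitian_element br theta Ups ->
  in_m theta Z ->
  even_power_series p -> even_power_series q ->
  pser_converges_on_m theta p (br (br Ups Z)) ->
  pser_converges_on_m theta q (br Z) ->
  forall v, in_m theta v ->
    pser_op p (br (br Ups Z)) (pser_op q (br Z) v)
    = pser_op q (br Z) (pser_op p (br (br Ups Z)) v).
Proof.
move=> [L _ _] Th Herm hZ ep eq Hp Hq v hv.
have FG := Comm L Th Herm hZ.
have [Hk Hz _ _ _] := Herm.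
have lf : linf (br (br Ups Z)) by apply: brr.
have lg : linf (br Z) by apply: brr.
have mJ : in_m theta (br Ups Z) by rewrite /in_m (thbr Th) Hk hZ (brNr L).
have Pf : forall w, in_m theta w -> in_m theta (br (br Ups Z) (br (br Ups Z) w)).
  by move=> w hw; apply: (C4 L Th mJ); apply: (C3 L Th mJ hw).
have Pg : forall w, in_m theta w -> in_m theta (br Z (br Z w)).
  by move=> w hw; apply: (C4 L Th hZ); apply: (C3 L Th hZ hw).
have Cm : forall u, in_m theta u -> forall j k, ~~ odd j -> ~~ odd k ->
    iter j (br (br Ups Z)) (iter k (br Z) u) = iter k (br Z) (iter j (br (br Ups Z)) u).
  by move=> u hu j k oj ok; apply: (even_iter_comm (P := in_m theta)).
have Qm : forall N w, in_m theta w -> in_m theta (pser_partial q (br Z) N w).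
  move=> N w hw; apply: (partial_in_m N Th eq) => // k w' hw' ok.
  exact: (even_iter_P (P := in_m theta)).
set f := br (br Ups Z) in lf Pf Cm Hp FG *.
set g := br Z in lg Pg Cm Qm Hq FG *.
set G := pser_op p f.
set F := pser_op q g.
have cG : forall u, in_m theta u -> pser_partial p f ^~ u @ \oo --> G u by move=> u hu; apply: Hp.
have cF : forall u, in_m theta u -> pser_partial q g ^~ u @ \oo --> F u by move=> u hu; apply: Hq.
have Fvm : in_m theta (F v).
  have h1 := lin_cvg (thl Th) (cF v hv).
  have h2 : (fun N => theta (pser_partial q g N v)) @ \oo --> - F v.
    have -> : (fun N => theta (pser_partial q g N v)) = (fun N => - pser_partial q g N v).
      by apply/funext => N; apply: Qm.
    by apply: cvgN; apply: cF.
  have e1 := cvg_lim (@norm_hausdorff _ _) h1; have e2 := cvg_lim (@norm_hausdorff _ _) h2.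
  rewrite /in_m -e2; symmetry; apply: e1.
have Glin : forall a u w, in_m theta u -> in_m theta w -> G (a *: u + w) = a *: G u + G w.
  move=> a u w hu hw; apply: (cvg_lim (@norm_hausdorff _ _)).
  have -> : (fun N => pser_partial p f N (a *: u + w)) = (fun N => a *: pser_partial p f N u + pser_partial p f N w).
    by apply/funext => N; apply: (linf_partial _ _ lf).
  apply: cvgD; last by apply: cG.
  by apply: cvgZ; [apply: cvg_cst | apply: cG].
have th2 : forall w, theta (theta w) = w by case: Th.
pose pi := fun w : 'rV[CC R]_n => (2%:R^-1 : CC R) *: (w - theta w).
have two0 : (2%:R : CC R) != 0 by rewrite (@pnatr_eq0 (CC R)).
have pim : forall w, in_m theta (pi w).
  by move=> w; rewrite /in_m /pi (linfZ (thl Th)) (linfB (thl Th)) th2 -scalerN opprB.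
have piid : forall w, in_m theta w -> pi w = w.
  move=> w hw; rewrite /pi hw opprK.
  have -> : w + w = (2%:R : CC R) *: w by rewrite scaler_nat mulr2n.
  by rewrite scalerA mulVf // scale1r.
have lpi : linf pi.
  move=> a x y; rewrite /pi (linfD (thl Th)) (linfZ (thl Th)) scalerA mulrC -scalerA -scalerDr.
  by congr (_ *: _); rewrite scalerBr opprD addrACA.
have lGpi : linf (fun w => G (pi w)).
  by move=> a x y /=; rewrite lpi Glin.
have E1 : forall N, G (pser_partial q g N v) = pser_partial q g N (G v).
  move=> N; apply: (cvg_lim (@norm_hausdorff _ _)).
  have -> : (fun M => pser_partial p f M (pser_partial q g N v)) = (fun M => pser_partial q g N (pser_partial p f M v)).
    by apply/funext => M; apply: PQ_comm => // j k oj ok; apply: Cm.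
  by apply: (lin_cvg (linf_partial _ _ lg)); apply: cG.
have E2 : (fun N => pser_partial q g N (G v)) @ \oo --> G (F v).
  have -> : (fun N => pser_partial q g N (G v)) = (fun N => G (pi (pser_partial q g N v))).
    by apply/funext => N; rewrite piid ?E1 //; apply: Qm.
  rewrite -(piid _ Fvm).
  by apply: (lin_cvg lGpi); apply: cF.
symmetry; apply: (cvg_lim (@norm_hausdorff _ _) E2).
Qed.
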